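(* Fix integers $p\ge 1$, $N_p\ge 1$, a time index $j\in\mathbb{N}$, a gain $K\in\mathbb{R}^{pn_u\times n_x}$, vectors $z_{l|j}\in\mathbb{R}^{n_x}$ and scalars $\alpha_{l|j}\ge 0$ for $l\in\{0,\dots,N_p\}$, vectors $V_{l|j}\in\mathbb{R}^{pn_u}$ for $l\in\{0,\dots,N_p-1\}$, and the current state $X_j\in\mathbb{R}^{n_x}$. Define the tube sets $\mathcal{X}_{l|j}=\{z_{l|j}\}\oplus\alpha_{l|j}\mathcal{X}_0=\{x: H_x(x-z_{l|j})\le \alpha_{l|j}\mathbf{1}\}$ and the policies $U_{l|j}(X)=KX+V_{l|j}$. Then the following tube conditions hold: (i) $X_j\in\mathcal{X}_{0|j}$; (ii) for all $l\in\{0,\dots,N_p-1\}$, all $X\in\mathcal{X}_{l|j}$, all $\theta\in\Theta$ and all $w_x\in\mathbb{W}_x$: $\bar A(\theta)X+\bar B(\theta)U_{l|j}(X)+w_x\in\mathcal{X}_{l+1|j}$; (iii) for all $l\in\{0,\dots,N_p-1\}$ and all $X\in\mathcal{X}_{l|j}$: $X\in\mathbb{X}$ and $U_{l|j}(X)\in\mathbb{U}^p$; (iv) for all $l\in\{0,\dots,N_p-1\}$, all $X\in\mathcal{X}_{l|j}$, all $\theta\in\Theta$ and all $w_y\in\mathbb{W}_y$: $\bar C(\theta)X+\bar D(\theta)U_{l|j}(X)+w_y\in\mathbb{X}^{p-1}$; if and only if there exist matrices $\Lambda^v_{l|j}\in\mathbb{R}_{\ge 0}^{(q_x+c_x(p-1))\times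 q_\theta}$ (entrywise nonnegative) such that for all $v\in\{1,\dots,n_v\}$ and all $l\in\{0,\dots,N_p-1\}$: $F z_{l|j}+\alpha_{l|j}\bar f\le\mathbf{1}$, $G_pK z_{l|j}+G_pV_{l|j}+\alpha_{l|j}\bar g\le \mathbf{1}$, $H_x(X_j-z_{0|j})\le \alpha_{0|j}\mathbf{1}$, $\Lambda^v_{l|j}h_\theta+H_p e^v_{l|j}\le \Phi_{l+1|j}-\bar w$, $H_pE^v_{l|j}=\Lambda^v_{l|j}H_\theta$.
   Context: Setting: $n_x,n_u,n_p\in\mathbb{N}$, $p\in\mathbb{N}$, $p\ge1$. Constraint sets $\mathbb{X}=\{x\in\mathbb{R}^{n_x}: Fx\le\mathbf{1}\}$ and $\mathbb{U}=\{u\in\mathbb{R}^{n_u}: Gu\le \mathbf{1}\}$ are compact polytopes with $F\in\mathbb{R}^{c_x\times n_x}$, $G\in\mathbb{R}^{c_u\times n_u}$; $\mathbb{U}^p$ and $\mathbb{X}^{p-1}$ denote Cartesian products, and $\mathbf{1}$ is a vector of ones of appropriate size. Matrices $\bar A(\theta)\in\mathbb{R}^{n_x\times n_x}$, $\bar B(\theta)\in\mathbb{R}^{n_x\times pn_u}$, $\bar C(\theta)\in\mathbb{R}^{(p-1)n_x\times n_x}$, $\bar D(\theta)\in\mathbb{R}^{(p-1)n_x\times pn_u}$ depend affinely on $\theta\in\mathbb{R}^{n_p}$: $(\bar A,\bar B,\bar C,\bar D)(\theta)=(\bar A_0,\bar B_0,\bar C_0,\bar D_0)+\sum_{i=1}^{n_p}(\bar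 A_i,\bar B_i,\bar C_i,\bar D_i)[\theta]_i$. The parameter set $\Theta=\{\theta\in\mathbb{R}^{n_p}: H_\theta\theta\le h_\theta\}$ is a nonempty bounded polytope, $H_\theta\in\mathbb{R}^{q_\theta\times n_p}$, $h_\theta\in\mathbb{R}^{q_\theta}$. $\mathbb{W}_x\subseteq\mathbb{R}^{n_x}$ and $\mathbb{W}_y\subseteq\mathbb{R}^{(p-1)n_x}$ are bounded polytopes. $\mathcal{X}_0=\{x\in\mathbb{R}^{n_x}:H_xx\le\mathbf{1}\}$, $H_x\in\mathbb{R}^{q_x\times n_x}$, is a bounded polytope with vertices $x^1,\dots,x^{n_v}$. Notation: $F_p=\mathrm{blkdiag}(F,\dots,F)$ ($p-1$ blocks), $G_p=\mathrm{blkdiag}(G,\dots,G)$ ($p$ blocks), $H_p=\mathrm{blkdiag}(H_x,F_p)$; $[\bar f]_i=\max_{x\in\mathcal{X}_0}[F]_ix$, $[\bar g]_i=\max_{x\in\mathcal{X}_0}[G_pK]_ix$, $[\bar w_x]_i=\max_{w\in\mathbb{W}_x}[H_x]_iw$, $[\bar w_y]_i=\max_{w\in\mathbb{W}_y}[F_p]_iw$ (where $[M]_i$ is the $i$-th row), $\bar w=[\bar w_x^\top,\bar w_y^\top]^\top$, $\Phi_{l+1|j}=[\alpha_{l+1|j}\mathbf{1}^\top,\mathbf{1}^\top]^\top\in\mathbb{R}^{q_x+c_x(p-1)}$. For each vertex: $X^v_{l|j}=z_{l|j}+\alpha_{l|j}x^v$, $U^v_{l|j}=V_{l|j}+KX^v_{l|j}$,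 $E^v_{l|j}$ is the matrix whose $i$-th column ($i=1,\dots,n_p$) is $\begin{bmatrix}\bar A_iX^v_{l|j}+\bar B_iU^v_{l|j}\\ \bar C_iX^v_{l|j}+\bar D_iU^v_{l|j}\end{bmatrix}$, and $e^v_{l|j}=\begin{bmatrix}\bar A_0X^v_{l|j}+\bar B_0U^v_{l|j}-z_{l+1|j}\\ \bar C_0X^v_{l|j}+\bar D_0U^v_{l|j}\end{bmatrix}$. *)

(* Defs.v *)
From mathcomp Require Import all_boot all_order all_algebra.
From mathcomp Require Import reals.
Set Implicit Arguments. Unset Strict Implicit. Unset Printing Implicit Defensive.
Import Order.TTheory GRing.Theory Num.Theory.
Local Open Scope ring_scope.

Section Defs.
Context {R : realType}.

Definition mle (m n : nat) (a b : 'M[R]_(m, n)) : Prop := forall i j, a i j <= b i j.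

Definition ones (m : nat) : 'cV[R]_m := const_mx 1.

Definition polyH (q n : nat) (H : 'M[R]_(q, n)) (h : 'cV[R]_q) : 'cV[R]_n -> Prop :=
  fun x => mle (H *m x) h.

Definition bounded_set (n : nat) (S : 'cV[R]_n -> Prop) : Prop :=
  exists M : R, forall x, S x -> forall i, `|x i 0| <= M.

Definition extreme_point (n : nat) (S : 'cV[R]_n -> Prop) (x : 'cV[R]_n) : Prop :=
  S x /\ forall (y z : 'cV[R]_n) (t : R), S y -> S z -> 0 < t -> t < 1 ->
    x = t *: y + (1 - t) *: z -> y = z.

Definition is_max_on (n : nat) (S : 'cV[R]_n -> Prop) (f : 'cV[R]_n -> R) (m : R) : Prop :=
  (exists x, S x /\ f x = m) /\ (forall x, S x -> f x <= m).

Definition rowf (q n : nat) (M : 'M[R]_(q, n)) (i : 'I_q) (x : 'cV[R]_n) : R :=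
  (row i M *m x) 0 0.

(* decomposition of an index of 'I_(k * m) into (block, offset), block-major *)
Definition blk_split (k m : nat) (i : 'I_(k * m)) : 'I_k * 'I_m :=
  enum_val (cast_ord (esym (mxvec_cast k m)) i).

(* blkdiag(A, ..., A), k copies *)
Definition blkrep (k m n : nat) (A : 'M[R]_(m, n)) : 'M[R]_(k * m, k * n) :=
  \matrix_(i, j) (if (blk_split i).1 == (blk_split j).1
                  then A (blk_split i).2 (blk_split j).2 else 0).

Definition affmx (np m n : nat) (M0 : 'M[R]_(m, n)) (Ms : 'I_np -> 'M[R]_(m, n))
  (th : 'cV[R]_np) : 'M[R]_(m, n) :=
  M0 + \sum_(i < np) th i 0 *: Ms i.

End Defs.

(* tube index helpers: for l : 'I_Np, cur l = l and nxt l = l+1 in 'I_Np.+1 *)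
Definition cur (Np : nat) (l : 'I_Np) : 'I_Np.+1 := widen_ord (leqnSn Np) l.
Definition nxt (Np : nat) (l : 'I_Np) : 'I_Np.+1 := lift ord0 l.

(* Main.v *)
Require Import Defs.
From mathcomp Require Import all_boot all_order all_algebra.
From mathcomp Require Import reals.
From mathcomp Require Import ring lra.
From Stdlib Require Import Classical.
Import Order.TTheory GRing.Theory Num.Theory.
Local Open Scope ring_scope.

Section Farkas.
Variables (R : realFieldType) (V : lmodType R).
Definition lin (f : V -> R) := forall k x y, f (k *: x + y) = k * f x + f y.

Lemma lin0 f : lin f -> f 0 = 0.
Proof. move=> hf; have := hf 1 0 0; rewrite scale1r addr0 mul1r; lra. Qed.

Lemma linD f x y : lin f -> f (x + y) = f x + f y.
Proof. by move=> hf; rewrite -[x]scale1r hf mul1r scale1r. Qed.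

Lemma linZ f k x : lin f -> f (k *: x) = k * f x.
Proof. by move=> hf; rewrite -[k *: x]addr0 hf lin0 // addr0. Qed.

Lemma hfarkas m : forall (a : nat -> V -> R) (c : V -> R), (forall i, lin (a i)) -> lin c ->
 (forall x, (forall i, (i < m)%N -> a i x <= 0) -> c x <= 0) ->
 exists lam : nat -> R, (forall i, 0 <= lam i) /\ forall x, c x = \sum_(i < m) lam i * a i x.
Proof.
elim: m => [|m IH] a c ha hc H.
  exists (fun _ => 0); split => // x; rewrite big_ord0.
  apply/eqP; rewrite eq_le H //=.
  have := H (- x) (fun i (hi : (i < 0)%N) => ltac:(by [])).
  by rewrite -scaleN1r linZ // mulN1r oppr_le0.
case: (classic (forall x, (forall i, (i < m)%N -> a i x <= 0) -> c x <= 0)) => Hm.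
  have [lam [lam0 hlam]] := IH a c ha hc Hm.
  exists (fun i => if (i < m)%N then lam i else 0); split.
    by move=> i; case: ifP.
  by move=> x; rewrite big_ord_recr /= ltnn mul0r addr0 hlam;
     apply: eq_bigr => i _; rewrite ltn_ord.
have [x0 Hx0] := not_all_ex_not _ _ Hm.
have [Ha0 Hc0] := imply_to_and _ _ Hx0.
have {}Hc0 : 0 < c x0 by rewrite ltNge; apply/negP.
set t := a m x0.
have t0 : 0 < t.
  rewrite ltNge; apply/negP => tle; move: Hc0; rewrite ltNge => /negP; apply.
  apply: H => i; rewrite ltnS leq_eqVlt => /orP [/eqP -> //|]; exact: Ha0.
have tn0 : t != 0 by rewrite gt_eqF.
pose a' i x := a i x - a i x0 / t * a m x.
pose c' x := c x - c x0 / t * a m x.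
have ha' i : lin (a' i) by move=> k x y; rewrite /a' /= !ha; ring.
have hc' : lin c' by move=> k x y; rewrite /c' /= hc ha; ring.
have H' : forall x, (forall i, (i < m)%N -> a' i x <= 0) -> c' x <= 0.
  move=> x hx; pose y := (- (a m x / t)) *: x0 + x.
  have ay i : a i y = a' i x by rewrite /y ha /a'; ring.
  have amy : a m y = 0 by rewrite /y ha -/t; field.
  have -> : c' x = c y by rewrite /y hc /c'; ring.
  apply: H => i; rewrite ltnS leq_eqVlt => /orP [/eqP ->|hi].
    by rewrite amy.
  by rewrite ay; apply: hx.
have [mu [mu0 hmu]] := IH a' c' ha' hc' H'.
pose S := \sum_(i < m) mu i * a i x0.
have S0 : S <= 0.
  by rewrite /S; apply: sumr_le0 => i _; apply: mulr_ge0_le0 => //; apply: Ha0.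
exists (fun i => if (i < m)%N then mu i else (c x0 - S) / t); split.
  by move=> i; case: ifP => // _; apply: divr_ge0; [lra| exact: ltW].
move=> x; rewrite big_ord_recr /= ltnn.
have -> : c x = c' x + c x0 / t * a m x by rewrite /c'; ring.
rewrite hmu.
have -> : \sum_(i < m) (if (i < m)%N then mu i else (c x0 - S) / t) * a i x
   = \sum_(i < m) mu i * a i x by apply: eq_bigr => i _; rewrite ltn_ord.
rewrite /a'.
under eq_bigr do rewrite mulrBr.
rewrite sumrB.
have -> : \sum_(i < m) mu i * (a i x0 / t * a m x) = S / t * a m x.
  by rewrite /S mulr_suml mulr_suml; apply: eq_bigr => i _; ring.
ring.
Qed.
End Farkas.
Arguments lin {R V} f.
Arguments hfarkas {R V m a c}.

Section FarkasAff.
Variable R : realFieldType.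

Lemma eD m n (A B : 'M[R]_(m,n)) i j : (A + B) i j = A i j + B i j.
Proof. by rewrite mxE. Qed.
Lemma eZ m n (A : 'M[R]_(m,n)) k i j : (k *: A) i j = k * A i j.
Proof. by rewrite mxE. Qed.
Lemma eN m n (A : 'M[R]_(m,n)) i j : (- A) i j = - A i j.
Proof. by rewrite mxE. Qed.
Lemma eB m n (A B : 'M[R]_(m,n)) i j : (A - B) i j = A i j - B i j.
Proof. by rewrite !mxE. Qed.

Lemma mulmx_entry n q (H : 'M[R]_(q,n)) (j : 'I_n) i : (H *m delta_mx j (0 : 'I_1)) i 0 = H i j.
Proof. by rewrite -colE mxE. Qed.

Lemma farkas_aff n q (H : 'M[R]_(q,n)) (h : 'cV_q) (c : 'rV_n) (b : R) :
 (exists th : 'cV_n, forall i, (H *m th) i 0 <= h i 0) ->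
 (forall th : 'cV_n, (forall i, (H *m th) i 0 <= h i 0) -> (c *m th) 0 0 <= b) ->
 exists lam : 'rV_q, (forall k, 0 <= lam 0 k) /\ lam *m H = c /\ (lam *m h) 0 0 <= b.
Proof.
move=> [th0 Hth0] Hc.
pose V := ('cV[R]_n * R^o)%type.
pose a (i : nat) (x : V) : R :=
  if @insub _ (fun k => (k < q)%N) 'I_q i is Some k then (H *m x.1) k 0 - h k 0 * x.2 else - x.2.
pose c' (x : V) : R := (c *m x.1) 0 0 - b * x.2.
have aE (k : 'I_q) x : a k x = (H *m x.1) k 0 - h k 0 * x.2 by rewrite /a valK.
have aq x : a q x = - x.2 by rewrite /a insubN // ltnn.
have ha i : lin (a i).
  move=> k x y; rewrite /a; case: insub => [j|] /=.
    rewrite mulmxDr -scalemxAr !mxE -[k *: x.2]/(k * x.2); ring.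
  rewrite -[k *: x.2]/(k * x.2); ring.
have hc : lin c' by move=> k x y; rewrite /c' /= mulmxDr -scalemxAr !mxE -[k *: x.2]/(k * x.2); ring.
have H' : forall x, (forall i, (i < q.+1)%N -> a i x <= 0) -> c' x <= 0.
  move=> [x t] hx.
  have t0 : 0 <= t by have := hx q (ltnSn q); rewrite aq /=; lra.
  have hk (k : 'I_q) : (H *m x) k 0 <= h k 0 * t.
    by have := hx k (leqW (ltn_ord k)); rewrite aE /=; lra.
  rewrite /c' /=.
  have [tp|] := ltP 0 t.
    have := Hc (t^-1 *: x) => /(_ _).
    have -> : (c *m (t^-1 *: x)) 0 0 = t^-1 * (c *m x) 0 0 by rewrite -scalemxAr mxE.
    move=> H1; suff : t^-1 * (c *m x) 0 0 <= b.
      rewrite ler_pdivrMl //; lra.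
    apply: H1 => i; rewrite -scalemxAr mxE ler_pdivrMl //.
    by rewrite mulrC; apply: hk.
  move=> tle; have t00 : t = 0 by lra.
  subst t.
  rewrite mulr0 subr0 leNgt; apply/negP => cx.
  set s := (b - (c *m th0) 0 0 + 1) / (c *m x) 0 0.
  have hb0 : (c *m th0) 0 0 <= b by apply: Hc.
  have H1 := Hc (th0 + s *: x).
  rewrite !mulmxDr -!scalemxAr !eD !eZ in H1.
  have e1 : s * (c *m x) 0 0 = b - (c *m th0) 0 0 + 1 by rewrite /s mulfVK // gt_eqF.
  rewrite e1 in H1; have : (c *m th0) 0 0 + (b - (c *m th0) 0 0 + 1) <= b.
    apply: H1 => i.
    have := hk i; rewrite mulr0 => hki.
    have s0 : 0 <= s by apply: divr_ge0; lra.
    have := Hth0 i; have : s * (H *m x) i 0 <= 0 by apply: mulr_ge0_le0.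
    rewrite eD eZ; lra.
  lra.
have [lam [lam0 hlam]] := hfarkas ha hc H'.
have hsum x : c' x = \sum_(k < q) lam k * ((H *m x.1) k 0 - h k 0 * x.2) + lam q * (- x.2).
  rewrite hlam big_ord_recr /= aq; congr (_ + _).
  by apply: eq_bigr => k _; rewrite aE.
exists (\row_k lam k); split; first by move=> k; rewrite mxE.
split.
  apply/rowP => j; have := hsum (delta_mx j 0, 0); rewrite /c' /= mulmx_entry.
  rewrite !mulr0 !subr0 oppr0 mulr0 addr0 => ->.
  under [RHS]eq_bigr do rewrite mulr0 subr0 mulmx_entry.
  rewrite [LHS]mxE; apply: eq_bigr => k _.
  by rewrite mxE.
have := hsum (0, 1); rewrite /c' /= mulmx0 => e.
have e2 : \sum_(k < q) lam k * h k 0 = b - lam q.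
  have e' : \sum_(k<q) lam k * ((H *m (0 : 'cV[R]_n)) k 0 - h k 0 * 1) = - \sum_(k<q) lam k * h k 0.
    by rewrite -sumrN; apply: eq_bigr => k _; rewrite mulmx0 mxE; ring.
  rewrite e' mxE in e; lra.
have := lam0 q.
rewrite mxE.
under eq_bigr do rewrite mxE.
lra.
Qed.
End FarkasAff.

Section Vertex.
Variable R : realType.
Variables (n q : nat) (H : 'M[R]_(q, n)) (h : 'cV[R]_q).

Definition ntight (y : 'cV[R]_n) := [set i | (H *m y) i 0 < h i 0].

Lemma HyD (y d : 'cV[R]_n) s i : (H *m (y + s *: d)) i 0 = (H *m y) i 0 + s * (H *m d) i 0.
Proof. by rewrite mulmxDr -scalemxAr eD eZ. Qed.

Lemma ray_unbounded (y d : 'cV[R]_n) : bounded_set (polyH H h) -> polyH H h y -> d != 0 ->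
  exists i, 0 < (H *m d) i 0.
Proof.
move=> [M hM] Py dn0; apply: NNPP => hn.
have hd : forall i, (H *m d) i 0 <= 0.
  by move=> i; rewrite leNgt; apply/negP => hi; apply: hn; exists i.
have [j dj] : exists j, d j 0 != 0.
  apply: NNPP => hj; move/eqP: dn0; apply; apply/matrixP => a b.
  rewrite (ord1 b) mxE; apply: NNPP => ha; apply: hj; exists a; exact/eqP.
have dpos : 0 < `|d j 0| by rewrite normr_gt0.
set s := (M + `|y j 0| + 1) / `|d j 0|.
have s0 : 0 <= s by apply: divr_ge0 => //; have := normr_ge0 (y j 0); have := hM y Py j;
  have := normr_ge0 (y j 0); lra.
have Py' : polyH H h (y + s *: d).
  move=> i b; rewrite (ord1 b) HyD; have := Py i 0; have := hd i.
  have : s * (H *m d) i 0 <= 0 by apply: mulr_ge0_le0.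
  lra.
have := hM _ Py' j; rewrite eD eZ.
have e : `|s * d j 0| = M + `|y j 0| + 1.
  by rewrite normrM ger0_norm // /s mulfVK // gt_eqF.
have := lerB_normD (s * d j 0) (y j 0); rewrite e (addrC (s * _)); lra.
Qed.

Lemma ray (y d : 'cV[R]_n) : bounded_set (polyH H h) -> polyH H h y -> d != 0 ->
  (forall i, (H *m y) i 0 = h i 0 -> (H *m d) i 0 = 0) ->
  exists2 s, 0 < s & polyH H h (y + s *: d) /\ (#|ntight (y + s *: d)| < #|ntight y|)%N.
Proof.
move=> hb Py dn0 ht.
have [i0 hi0] := ray_unbounded _ _ hb Py dn0.
pose g i := (h i 0 - (H *m y) i 0) / (H *m d) i 0.
case: (@arg_minP _ R _ i0 (fun i => 0 < (H *m d) i 0) g hi0) => i1 his hmin.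
have nt : (H *m y) i1 0 < h i1 0.
  have := Py i1 0; rewrite le_eqVlt => /orP [/eqP e|//].
  by move: his; rewrite (ht _ e) ltxx.
exists (g i1).
  by apply: divr_gt0 => //; lra.
have Py' : polyH H h (y + g i1 *: d).
  move=> i b; rewrite (ord1 b) HyD.
  have [dp|dn] := ltP 0 ((H *m d) i 0).
    have := hmin i dp; rewrite /g -/(g i1) => hle.
    have : g i1 * (H *m d) i 0 <= h i 0 - (H *m y) i 0.
      by rewrite -ler_pdivlMr.
    lra.
  have : g i1 * (H *m d) i 0 <= 0.
    by apply: mulr_ge0_le0 => //; apply: ltW; apply: divr_gt0 => //; lra.
  have := Py i 0; lra.
split => //; apply: proper_card; apply/properP; split.
  apply/subsetP => i; rewrite !inE HyD => hlt.
  rewrite ltNge; apply/negP => hge.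
  have e : (H *m y) i 0 = h i 0 by have := Py i 0; lra.
  by move: hlt; rewrite (ht _ e) mulr0 addr0 e ltxx.
exists i1; first by rewrite inE.
rewrite inE HyD /g mulfVK ?gt_eqF //.
have -> : (H *m y) i1 0 + (h i1 0 - (H *m y) i1 0) = h i1 0 by ring.
by rewrite ltxx.
Qed.

Lemma HyB (y1 z1 : 'cV[R]_n) i : (H *m (y1 - z1)) i 0 = (H *m y1) i 0 - (H *m z1) i 0.
Proof. by rewrite mulmxBr eB. Qed.

Lemma HyC (y1 z1 : 'cV[R]_n) t i :
  (H *m (t *: y1 + (1 - t) *: z1)) i 0 = t * (H *m y1) i 0 + (1 - t) * (H *m z1) i 0.
Proof. by rewrite mulmxDr -!scalemxAr eD !eZ. Qed.

Lemma vertex_bound nv (xv : 'I_nv -> 'cV[R]_n) (f : 'cV[R]_n -> R) (b : R) :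
 bounded_set (polyH H h) ->
 (forall x, extreme_point (polyH H h) x -> exists v, xv v = x) ->
 (forall y w t, f (t *: y + (1 - t) *: w) = t * f y + (1 - t) * f w) ->
 (forall v, f (xv v) <= b) ->
 forall y, polyH H h y -> f y <= b.
Proof.
move=> hb hext haff hv.
suff S : forall k y, (#|ntight y| < k)%N -> polyH H h y -> f y <= b.
  by move=> y; apply: (S #|ntight y|.+1).
elim=> [//|k IH] y hk Py.
case: (classic (extreme_point (polyH H h) y)) => hne.
  by have [v <-] := hext _ hne.
have [y1 [z1 [t [P1 [P2 [t0 [t1 [e ne]]]]]]]] : exists (y1 z1 : 'cV[R]_n) (t : R), polyH H h y1 /\ polyH H h z1 /\ 0 < t /\ t < 1 /\ y = t *: y1 + (1 - t) *: z1 /\ y1 <> z1.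
  apply: NNPP => hn; apply: hne; split => // y1 z1 t P1 P2 t0 t1 e; apply: NNPP => ne.
  by apply: hn; exists y1, z1, t.
pose d := y1 - z1.
have dn0 : d != 0 by rewrite subr_eq0; apply/eqP.
have ht : forall i, (H *m y) i 0 = h i 0 -> (H *m d) i 0 = 0.
  move=> i; rewrite e HyC HyB => hi.
  have a1 := P1 i 0; have a2 := P2 i 0.
  have u1 : 0 <= t * (h i 0 - (H *m y1) i 0) by apply: mulr_ge0; lra.
  have u2 : 0 <= (1 - t) * (h i 0 - (H *m z1) i 0) by apply: mulr_ge0; lra.
  have w1 : t * (h i 0 - (H *m y1) i 0) = 0 by lra.
  have w2 : (1 - t) * (h i 0 - (H *m z1) i 0) = 0 by lra.
  move/eqP: w1; rewrite mulf_eq0 gt_eqF //= subr_eq0 => /eqP w1.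
  move/eqP: w2; rewrite mulf_eq0 subr_eq0 eq_sym lt_eqF //= subr_eq0 => /eqP w2.
  lra.
have dn0' : - d != 0 by rewrite oppr_eq0.
have ht' : forall i, (H *m y) i 0 = h i 0 -> (H *m - d) i 0 = 0.
  by move=> i hi; rewrite mulmxN eN ht // oppr0.
have [s1 s10 [Py1 N1]] := ray _ _ hb Py dn0 ht.
have [s2 s20 [Py2 N2]] := ray _ _ hb Py dn0' ht'.
pose l := s2 / (s1 + s2).
have ey : y = l *: (y + s1 *: d) + (1 - l) *: (y + s2 *: - d).
  apply/matrixP => i j; rewrite !eD !eZ !eD !eZ eN /l; field; lra.
have f1 : f (y + s1 *: d) <= b by apply: IH => //; apply: leq_trans N1 _.
have f2 : f (y + s2 *: - d) <= b by apply: IH => //; apply: leq_trans N2 _.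
rewrite ey haff.
have l0 : 0 <= l by apply: divr_ge0; lra.
have l1 : 0 <= 1 - l.
  rewrite subr_ge0 /l ler_pdivrMr; lra.
have := ler_wpM2l l0 f1; have := ler_wpM2l l1 f2; lra.
Qed.
End Vertex.

Section Aff.
Variable R : realType.
Variable n : nat.

Definition aff {m} (g : 'cV[R]_n -> 'M[R]_(m,1)) :=
  forall y w t, g (t *: y + (1 - t) *: w) = t *: g y + (1 - t) *: g w.

Lemma aff_const m (c : 'M[R]_(m,1)) : aff (fun _ => c).
Proof. by move=> y w t; rewrite -scalerDl addrC subrK scale1r. Qed.

Lemma aff_id : aff (fun y => y).
Proof. by []. Qed.

Lemma aff_mul m k (M : 'M[R]_(k,m)) g : aff g -> aff (fun y => M *m g y).
Proof. by move=> hg y w t; rewrite hg mulmxDr -!scalemxAr. Qed.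

Lemma aff_scale m (a : R) g : @aff m g -> aff (fun y => a *: g y).
Proof. by move=> hg y w t; rewrite hg scalerDr !scalerA (mulrC a) (mulrC a). Qed.

Lemma aff_add m g1 g2 : @aff m g1 -> aff g2 -> aff (fun y => g1 y + g2 y).
Proof. by move=> h1 h2 y w t; rewrite h1 h2 !scalerDr addrACA. Qed.

Lemma aff_sub m g1 g2 : @aff m g1 -> aff g2 -> aff (fun y => g1 y - g2 y).
Proof. by move=> h1 h2 y w t; rewrite h1 h2 !scalerBr opprD addrACA. Qed.

Lemma aff_col m1 m2 g1 g2 : @aff m1 g1 -> @aff m2 g2 -> aff (fun y => col_mx (g1 y) (g2 y)).
Proof. by move=> h1 h2 y w t; rewrite h1 h2 !scale_col_mx add_col_mx. Qed.

Lemma aff_entry m g (r : 'I_m) : @aff m g ->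
  forall y w t, g (t *: y + (1 - t) *: w) r 0 = t * g y r 0 + (1 - t) * g w r 0.
Proof. by move=> hg y w t; rewrite hg eD !eZ. Qed.

End Aff.

Ltac affT := repeat first [ apply: aff_mul | apply: aff_col | apply: aff_sub
  | apply: aff_add | apply: aff_scale | apply: aff_id | apply: aff_const ].

Section Tube.
Variable R : realType.

Lemma onesE m i j : (ones m : 'cV[R]_m) i j = 1.
Proof. by rewrite /ones mxE. Qed.

Lemma tube_param n q (Hx : 'M[R]_(q, n)) (z X : 'cV[R]_n) (a : R) :
  bounded_set (polyH Hx (ones q)) -> 0 <= a ->
  mle (Hx *m (X - z)) (a *: ones q) ->
  exists2 y, polyH Hx (ones q) y & X = z + a *: y.
Proof.
move=> hb a0 hX.
have [ap|] := ltP 0 a.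
  exists (a^-1 *: (X - z)).
    move=> i j; rewrite -scalemxAr eZ onesE.
    have := hX i j; rewrite eZ onesE mulr1 => hi.
    by rewrite ler_pdivrMl // mulr1.
  by rewrite scalerA mulfV ?gt_eqF // scale1r addrC subrK.
move=> ale; have a00 : a = 0 by lra.
subst a; exists 0.
  by move=> i j; rewrite mulmx0 !mxE ler01.
have : X - z == 0.
  apply/negP => /negP dn0.
  have P0 : polyH Hx (ones q) 0 by move=> i j; rewrite mulmx0 !mxE ler01.
  have [i hi] := @ray_unbounded R n q Hx (ones q) 0 (X - z) hb P0 dn0.
  by have := hX i 0; rewrite eZ mul0r; rewrite leNgt hi.
by rewrite subr_eq0 => /eqP ->; rewrite scale0r addr0.
Qed.

Lemma tube_mem n q (Hx : 'M[R]_(q, n)) (z y : 'cV[R]_n) (a : R) :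
  0 <= a -> polyH Hx (ones q) y -> mle (Hx *m ((z + a *: y) - z)) (a *: ones q).
Proof.
move=> a0 Py i j; rewrite addrC addKr -scalemxAr !eZ.
by apply: ler_wpM2l.
Qed.

Lemma rowfE q n (M : 'M[R]_(q,n)) i x : rowf M i x = (M *m x) i 0.
Proof. by rewrite /rowf -row_mul mxE. Qed.

Lemma affmxE np m n (M0 : 'M[R]_(m,n)) Ms (th : 'cV[R]_np) (X : 'cV[R]_n) k :
  (affmx M0 Ms th *m X) k 0 = (M0 *m X) k 0 + \sum_i th i 0 * (Ms i *m X) k 0.
Proof.
rewrite /affmx mulmxDl mulmx_suml eD summxE; congr (_ + _).
by apply: eq_bigr => i _; rewrite -scalemxAl eZ.
Qed.

Lemma sum_split I (r : seq I) (c a b : I -> R) :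
  \sum_(i <- r) c i * (a i + b i) = \sum_(i <- r) c i * a i + \sum_(i <- r) c i * b i.
Proof. by rewrite -big_split; apply: eq_bigr => i _; rewrite mulrDr. Qed.

Lemma evE np nx ny nu (A0 : 'M[R]_(nx,nx)) As (B0 : 'M[R]_(nx,nu)) Bs
  (C0 : 'M[R]_(ny,nx)) Cs (D0 : 'M[R]_(ny,nu)) Ds (th : 'cV[R]_np) X U z' :
  col_mx (A0 *m X + B0 *m U - z') (C0 *m X + D0 *m U) +
  (\matrix_(r, i) (col_mx (As i *m X + Bs i *m U) (Cs i *m X + Ds i *m U)) r 0 : 'M_(nx + ny, np)) *m th
  = col_mx (affmx A0 As th *m X + affmx B0 Bs th *m U - z') (affmx C0 Cs th *m X + affmx D0 Ds th *m U).
Proof.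
apply/matrixP => r j; rewrite (ord1 j) eD.
have -> : forall r, ((\matrix_(r, i) (col_mx (As i *m X + Bs i *m U) (Cs i *m X + Ds i *m U)) r 0 : 'M_(nx + ny, np)) *m th) r 0 = \sum_i th i 0 * (col_mx (As i *m X + Bs i *m U) (Cs i *m X + Ds i *m U)) r 0.
  by move=> r'; rewrite mxE; apply: eq_bigr => i _; rewrite mxE mulrC.
rewrite -(splitK r); case: (split r) => k /=.
  under eq_bigr do rewrite col_mxEu eD.
  rewrite !col_mxEu !eB !eD !affmxE sum_split; ring.
under eq_bigr do rewrite col_mxEd eD.
rewrite !col_mxEd !eD !affmxE sum_split; ring.
Qed.

Lemma HpE q n c m (Hx : 'M[R]_(q,n)) (Fp : 'M[R]_(c,m)) (a : 'cV[R]_n) (b : 'cV[R]_m) :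
  block_mx Hx 0 0 Fp *m col_mx a b = col_mx (Hx *m a) (Fp *m b).
Proof. by rewrite mul_block_col !mul0mx addr0 add0r. Qed.

Lemma mulmx_mono q m (L : 'M[R]_(q,m)) (a b : 'cV[R]_m) r :
  (forall i k, 0 <= L i k) -> mle a b -> (L *m a) r 0 <= (L *m b) r 0.
Proof.
move=> L0 hab; rewrite !mxE; apply: ler_sum => k _.
by apply: ler_wpM2l.
Qed.

End Tube.

Theorem proposition1 (R : realType)
  (nx nu np p cx cu qth qx qwx qwy nv Np : nat)
  (F : 'M[R]_(cx, nx)) (G : 'M[R]_(cu, nu))
  (A0 : 'M[R]_(nx, nx)) (As : 'I_np -> 'M[R]_(nx, nx))
  (B0 : 'M[R]_(nx, p * nu)) (Bs : 'I_np -> 'M[R]_(nx, p * nu))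
  (C0 : 'M[R]_(p.-1 * nx, nx)) (Cs : 'I_np -> 'M[R]_(p.-1 * nx, nx))
  (D0 : 'M[R]_(p.-1 * nx, p * nu)) (Ds : 'I_np -> 'M[R]_(p.-1 * nx, p * nu))
  (Hth : 'M[R]_(qth, np)) (hth : 'cV[R]_qth)
  (Hwx : 'M[R]_(qwx, nx)) (hwx : 'cV[R]_qwx)
  (Hwy : 'M[R]_(qwy, p.-1 * nx)) (hwy : 'cV[R]_qwy)
  (Hx : 'M[R]_(qx, nx)) (xv : 'I_nv -> 'cV[R]_nx)
  (K : 'M[R]_(p * nu, nx))
  (z : 'I_Np.+1 -> 'cV[R]_nx) (alpha : 'I_Np.+1 -> R)
  (V : 'I_Np -> 'cV[R]_(p * nu)) (Xj : 'cV[R]_nx)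
  (fbar : 'cV[R]_cx) (gbar : 'cV[R]_(p * cu))
  (wbx : 'cV[R]_qx) (wby : 'cV[R]_(p.-1 * cx)) :
  (0 < p)%N -> (0 < Np)%N ->
  (* X and U are compact polytopes *)
  bounded_set (polyH F (ones cx)) -> bounded_set (polyH G (ones cu)) ->
  (* Theta is a nonempty bounded polytope *)
  (exists th, polyH Hth hth th) -> bounded_set (polyH Hth hth) ->
  (* W_x, W_y bounded polytopes *)
  bounded_set (polyH Hwx hwx) -> bounded_set (polyH Hwy hwy) ->
  (* X_0 bounded polytope with vertices x^1..x^nv *)
  bounded_set (polyH Hx (ones qx)) ->
  (forall v, extreme_point (polyH Hx (ones qx)) (xv v)) ->
  (forall x, extreme_point (polyH Hx (ones qx)) x -> exists v, xv v = x) ->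
  (forall l, 0 <= alpha l) ->
  (* definitions of fbar, gbar, wbar_x, wbar_y as row-wise maxima *)
  (forall i, is_max_on (polyH Hx (ones qx)) (rowf F i) (fbar i 0)) ->
  (forall i, is_max_on (polyH Hx (ones qx)) (rowf (blkrep p G *m K) i) (gbar i 0)) ->
  (forall i, is_max_on (polyH Hwx hwx) (rowf Hx i) (wbx i 0)) ->
  (forall i, is_max_on (polyH Hwy hwy) (rowf (blkrep p.-1 F) i) (wby i 0)) ->
  let Xt (l : 'I_Np.+1) (x : 'cV[R]_nx) := mle (Hx *m (x - z l)) (alpha l *: ones qx) in
  let U (l : 'I_Np) (x : 'cV[R]_nx) := K *m x + V l in
  let Gp := blkrep p G in
  let Fp := blkrep p.-1 F in
  let Hp := block_mx Hx 0 0 Fp in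
  ( Xt ord0 Xj
    /\ (forall (l : 'I_Np) x th wx, Xt (cur l) x -> polyH Hth hth th -> polyH Hwx hwx wx ->
          Xt (nxt l) (affmx A0 As th *m x + affmx B0 Bs th *m U l x + wx))
    /\ (forall (l : 'I_Np) x, Xt (cur l) x ->
          polyH F (ones cx) x /\ polyH Gp (ones (p * cu)) (U l x))
    /\ (forall (l : 'I_Np) x th wy, Xt (cur l) x -> polyH Hth hth th -> polyH Hwy hwy wy ->
          polyH Fp (ones (p.-1 * cx)) (affmx C0 Cs th *m x + affmx D0 Ds th *m U l x + wy)) )
  <->
  (exists Lam : 'I_nv -> 'I_Np -> 'M[R]_(qx + p.-1 * cx, qth),
     (forall v l i k, 0 <= Lam v l i k) /\
     forall (v : 'I_nv) (l : 'I_Np),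
       let Xv := z (cur l) + alpha (cur l) *: xv v in
       let Uv := V l + K *m Xv in
       let Ev : 'M[R]_(nx + p.-1 * nx, np) :=
         \matrix_(r, i) (col_mx (As i *m Xv + Bs i *m Uv) (Cs i *m Xv + Ds i *m Uv)) r 0 in
       let ev := col_mx (A0 *m Xv + B0 *m Uv - z (nxt l)) (C0 *m Xv + D0 *m Uv) in
       let Phi := col_mx (alpha (nxt l) *: ones qx) (ones (p.-1 * cx)) in
       mle (F *m z (cur l) + alpha (cur l) *: fbar) (ones cx)
       /\ mle (Gp *m K *m z (cur l) + Gp *m V l + alpha (cur l) *: gbar) (ones (p * cu))
       /\ mle (Hx *m (Xj - z ord0)) (alpha ord0 *: ones qx)
       /\ mle (Lam v l *m hth + Hp *m ev) (Phi - col_mx wbx wby)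
       /\ Hp *m Ev = Lam v l *m Hth).
Proof.
move=> p0 Np0 bX bU [th0 Hth0] bTh bWx bWy bX0 hxv hext alpha0 hf hg hwxm hwym Xt U Gp Fp Hp.
pose XvF (v : 'I_nv) (l : 'I_Np) := z (cur l) + alpha (cur l) *: xv v.
pose UvF v l := V l + K *m XvF v l.
pose EvF v l : 'M_(nx + p.-1 * nx, np) :=
  \matrix_(r, i) (col_mx (As i *m XvF v l + Bs i *m UvF v l) (Cs i *m XvF v l + Ds i *m UvF v l)) r 0.
pose evF v l := col_mx (A0 *m XvF v l + B0 *m UvF v l - z (nxt l)) (C0 *m XvF v l + D0 *m UvF v l).
pose PhiF (l : 'I_Np) := col_mx (alpha (nxt l) *: ones qx) (ones (p.-1 * cx)).
have ths : forall th : 'cV[R]_np, polyH Hth hth th <-> forall i, (Hth *m th) i 0 <= hth i 0.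
  by move=> th; split => [h1 i|h1 i j]; [apply: h1|rewrite (ord1 j); apply: h1].
have XvT : forall v l, Xt (cur l) (XvF v l).
  by move=> v l; apply: tube_mem => //; exact: (hxv v).1.
split.
  move=> [Hi [Hii [Hiii Hiv]]].
  have thfeas : exists th : 'cV[R]_np, forall i, (Hth *m th) i 0 <= hth i 0.
    by exists th0; apply/ths.
  have row_claim : forall (v : 'I_nv) (l : 'I_Np) (r : 'I_(qx + p.-1 * cx)), exists lam : 'rV[R]_qth,
    (forall k, 0 <= lam 0 k) /\ lam *m Hth = row r (Hp *m EvF v l) /\
    (lam *m hth) 0 0 <= (PhiF l - col_mx wbx wby) r 0 - (Hp *m evF v l) r 0.
    move=> v l r; apply: farkas_aff => // th hth'.
    have -> : (row r (Hp *m EvF v l) *m th) 0 0 = (Hp *m EvF v l *m th) r 0 by rewrite -row_mul mxE.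
    have E : (Hp *m evF v l) r 0 + (Hp *m EvF v l *m th) r 0 = (Hp *m (evF v l + EvF v l *m th)) r 0.
      by rewrite mulmxDr mulmxA eD.
    suff : (Hp *m (evF v l + EvF v l *m th)) r 0 <= (PhiF l - col_mx wbx wby) r 0 by lra.
    rewrite /evF /EvF evE HpE /PhiF.
    rewrite -(splitK r); case: (split r) => k /=.
      rewrite col_mxEu eB !col_mxEu eZ ?onesE mulr1.
      have [[wx [Pwx ewx]] _] := hwxm k; rewrite rowfE in ewx.
      have := Hii l (XvF v l) th wx (XvT v l) (proj2 (ths th) hth') Pwx.
      rewrite /Xt /U => /(_ k 0) H1.
      rewrite (addrAC _ wx) (mulmxDr Hx _ wx) eD eZ ?onesE mulr1 ewx in H1.
      rewrite /UvF (addrC (V l)); lra.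
    rewrite col_mxEd eB !col_mxEd ?onesE.
    have [[wy [Pwy ewy]] _] := hwym k; rewrite rowfE in ewy.
    have := Hiv l (XvF v l) th wy (XvT v l) (proj2 (ths th) hth') Pwy.
    rewrite /U => /(_ k 0); rewrite mulmxDr eD ?onesE ewy.
    rewrite /UvF (addrC (V l)); lra.
  have h1 := fun v l => fin_all_exists (row_claim v l).
  have h2 := fun v => fin_all_exists (h1 v).
  have [FL hFL] := fin_all_exists h2.
  exists (fun v l => \matrix_(r, k) FL v l r 0 k); split.
    by move=> v l i k; rewrite mxE; have [h0 _] := hFL v l i; apply: h0.
  move=> v l Xv Uv Ev ev Phi.
  have rowL : forall i, row i (\matrix_(r, k) FL v l r 0 k) = FL v l i.
    by move=> i; apply/rowP => k; rewrite !mxE.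
  split.
    move=> i j; rewrite (ord1 j).
    have [[x0 [P0 e0]] _] := hf i; rewrite rowfE in e0.
    have [hF _] := Hiii l (z (cur l) + alpha (cur l) *: x0) (@tube_mem R _ _ Hx (z (cur l)) x0 (alpha (cur l)) (alpha0 _) P0).
    have := hF i 0; rewrite mulmxDr -scalemxAr eD eZ e0 ?onesE.
    by rewrite eD eZ.
  split.
    move=> i j; rewrite (ord1 j).
    have [[x0 [P0 e0]] _] := hg i; rewrite rowfE in e0.
    have [_ hG] := Hiii l (z (cur l) + alpha (cur l) *: x0) (@tube_mem R _ _ Hx (z (cur l)) x0 (alpha (cur l)) (alpha0 _) P0).
    have := hG i 0; rewrite /U !mulmxDr !mulmxA -!scalemxAr !eD eZ e0 ?onesE.
    by rewrite eZ; lra.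
  split; first exact: Hi.
  split.
    move=> i j; rewrite (ord1 j) eD.
    have [_ [_ hb]] := hFL v l i.
    have -> : ((\matrix_(r, k) FL v l r 0 k) *m hth) i 0 = (FL v l i *m hth) 0 0.
      by rewrite -rowL -row_mul [RHS]mxE.
    change ((FL v l i *m hth) 0 0 + (Hp *m evF v l) i 0 <= (PhiF l - col_mx wbx wby) i 0).
    lra.
  apply/row_matrixP => i; rewrite [RHS]row_mul rowL.
  by have [_ [-> _]] := hFL v l i.
move=> [Lam [Lam0 hC]].
have P0 : polyH Hx (ones qx) 0 by move=> i j; rewrite mulmx0 !mxE ler01.
have [v0 _] : exists v : 'I_nv, True.
  apply: NNPP => hn.
  have H1 : (1:R) <= 0.
    apply: (@vertex_bound R nx qx Hx (ones qx) nv xv (fun _ => 1) 0 bX0 hext _ _ 0 P0).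
      by move=> y w t; ring.
    by move=> v; exfalso; apply: hn; exists v.
  by move: H1; rewrite ler10.
pose l0 : 'I_Np := Ordinal Np0.
pose gF (l : 'I_Np) (th : 'cV[R]_np) (y : 'cV[R]_nx) :=
  Hp *m col_mx (affmx A0 As th *m (z (cur l) + alpha (cur l) *: y)
                  + affmx B0 Bs th *m (V l + K *m (z (cur l) + alpha (cur l) *: y)) - z (nxt l))
               (affmx C0 Cs th *m (z (cur l) + alpha (cur l) *: y)
                  + affmx D0 Ds th *m (V l + K *m (z (cur l) + alpha (cur l) *: y))).
have GG : forall (l : 'I_Np) th, polyH Hth hth th -> forall y, polyH Hx (ones qx) y ->
    forall r, (gF l th y) r 0 <= (PhiF l - col_mx wbx wby) r 0.
  move=> l th hth' y Py r.
  apply: (@vertex_bound R nx qx Hx (ones qx) nv xv (fun y => gF l th y r 0)) => //.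
    by apply: aff_entry; rewrite /gF; affT.
  move=> v; have [c1 [c2 [c3 [c4 c5]]]] := hC v l.
  have -> : gF l th (xv v) = Hp *m (evF v l + EvF v l *m th) by rewrite /gF /evF /EvF evE.
  rewrite mulmxDr mulmxA c5 -mulmxA eD.
  have := c4 r 0; rewrite eD.
  have := @mulmx_mono R _ _ (Lam v l) (Hth *m th) hth r (Lam0 v l) hth'.
  lra.
split.
  by have [_ [_ [c3 _]]] := hC v0 l0.
split.
  move=> l X th wx hX hth' hwx'.
  have [y Py ->] := @tube_param R _ _ Hx (z (cur l)) X (alpha (cur l)) bX0 (alpha0 _) hX.
  rewrite /Xt /U => k j; rewrite (ord1 j).
  have := GG l th hth' y Py (lshift _ k).
  rewrite /gF HpE col_mxEu eB !col_mxEu eZ ?onesE mulr1 => H1.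
  have := (hwxm k).2 wx hwx'; rewrite rowfE => H2.
  rewrite (addrAC _ wx) (mulmxDr Hx _ wx) eD (addrC (K *m _)).
  lra.
split.
  move=> l X hX.
  have [y Py ->] := @tube_param R _ _ Hx (z (cur l)) X (alpha (cur l)) bX0 (alpha0 _) hX.
  have [c1 [c2 _]] := hC v0 l.
  split.
    move=> i j; rewrite (ord1 j).
    have := (hf i).2 y Py; rewrite rowfE => H2.
    have := c1 i 0; rewrite eD eZ ?onesE => H1.
    have := ler_wpM2l (alpha0 (cur l)) H2 => H3.
    rewrite mulmxDr -scalemxAr eD eZ; lra.
  move=> i j; rewrite (ord1 j).
  have := (hg i).2 y Py; rewrite rowfE => H2.
  have := c2 i 0; rewrite !eD eZ ?onesE => H1.
  have := ler_wpM2l (alpha0 (cur l)) H2 => H3.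
  rewrite /U !mulmxDr !mulmxA -!scalemxAr !eD eZ ?onesE; lra.
move=> l X th wy hX hth' hwy'.
have [y Py ->] := @tube_param R _ _ Hx (z (cur l)) X (alpha (cur l)) bX0 (alpha0 _) hX.
rewrite /U => k j; rewrite (ord1 j).
have := GG l th hth' y Py (rshift _ k).
rewrite /gF HpE col_mxEd eB !col_mxEd ?onesE => H1.
have := (hwym k).2 wy hwy'; rewrite rowfE => H2.
rewrite (mulmxDr Fp _ wy) eD ?onesE (addrC (K *m _)).
lra.
Qed.
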